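(* Let $\theta:H\to H$ be an endomorphism. Then: (1) every $\theta$-maximal hyperideal of $H$ is an $n$-ary Endo-prime hyperideal associated with $\theta$; (2) if $E$ is a hyperideal of $H$ such that $rad(E)$ is a $\theta$-maximal hyperideal, then $E$ is an $n$-ary Endo-primary hyperideal associated with $\theta$.
   Context: Throughout, $(H,h,k)$ is a commutative Krasner $(m,n)$-hyperring with scalar identity $1_H$: $(H,h)$ is a canonical $m$-ary hypergroup (a commutative associative $m$-ary hyperoperation $h:H^m\to\mathcal P^*(H)$ with a unique zero $0$ such that $h(u,0^{(m-1)})=\{u\}$, unique inverses, reversibility), $k:H^n\to H$ is a commutative associative $n$-ary operation distributing over $h$ in each argument, $k(0,u_2^n)=0$, and $k(u,1_H^{(n-1)})=u$ for all $u$. Notation: $u_i^j$ denotes $u_i,\dots,u_j$ (empty if $j<i$); $u^{(t)}$ denotes $u$ repeated $t$ times; for $r=l(n-1)+1$, $k_{(l)}(u_1^r)=k(k(\cdots k(k(u_1^n),u_{n+1}^{2n-1})\cdots),u_{r-n+1}^{r})$. A hyperideal is a nonempty $I\subseteq H$ such that $(I,h)$ is an $m$-ary subhypergroup and $k(u_1^{i-1},I,u_{i+1}^n)\subseteq I$ for all $u_j\in H$. An endomorphism is a map $\theta$ with $\theta(h(u_1^m))=h(\theta(u_1),\dots,\theta(u_m))$, $\theta(k(u_1^n))=k(\theta(u_1),\dots,\theta(u_n))$, $\theta(1_H)=1_H$. $rad(E)$ is the set of $u$ with $k(u^{(r)},1_H^{(n-r)})\in E$ for some $r\le n$ or $k_{(l)}(u^{(r)})\in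 E$ for some $r=l(n-1)+1>n$ (equivalently the intersection of all $n$-ary prime hyperideals containing $E$). A proper hyperideal $M$ is $\theta$-maximal if for every hyperideal $E$ with $M\subseteq E$, either $\theta(E)\subseteq M$ or $E=H$. A proper hyperideal $E$ is an $n$-ary Endo-prime hyperideal associated with $\theta$ if for all $u_1,\dots,u_n\in H$, $k(u_1^n)\in E$ implies that for some $i$, $u_i\in E$ or $\theta\big(k(u_1^{i-1},1_H,u_{i+1}^n)\big)\in E$; it is an $n$-ary Endo-primary hyperideal associated with $\theta$ if $k(u_1^n)\in E$ implies that for some $i$, $u_i\in E$ or $\theta\big(k(u_1^{i-1},1_H,u_{i+1}^n)\big)\in rad(E)$. *)

(* Defs.v *)
From Stdlib Require Import List Arith Permutation.
Import ListNotations.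
Set Implicit Arguments.

Section Hyperring.
Variables (H : Type) (m n : nat).
(* h xs z  means  z \in h(xs)  (xs of length m) ; k xs is the n-ary product. *)
Variables (h : list H -> H -> Prop) (k : list H -> H) (zero one : H) (inv : H -> H).

Definition hset (As : list (H -> Prop)) (z : H) : Prop :=
  exists xs, Forall2 (fun A x => A x) As xs /\ h xs z.

Definition singl (x : H) : H -> Prop := fun y => y = x.

(* list xs with its i-th entry (0-based) replaced by y *)
Definition replace_at (i : nat) (y : H) (xs : list H) : list H :=
  firstn i xs ++ y :: skipn (S i) xs.

Definition remove_at (i : nat) (xs : list H) : list H :=
  firstn i xs ++ skipn (S i) xs.

(* h(x_1^{i}, h(x_{i+1}^{i+m}), x_{i+m+1}^{2m-1}) as a set *)
Definition h_assoc_at (i : nat) (xs : list H) : H -> Prop :=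
  hset (map singl (firstn i xs) ++ [h (firstn m (skipn i xs))]
        ++ map singl (skipn (i + m) xs)).

Definition k_assoc_at (i : nat) (xs : list H) : H :=
  k (firstn i xs ++ [k (firstn n (skipn i xs))] ++ skipn (i + n) xs).

Record KrasnerHyperring : Prop := {
  kh_m : 2 <= m;
  kh_n : 2 <= n;
  h_nonempty : forall xs, length xs = m -> exists z, h xs z;
  h_comm : forall xs ys z, length xs = m -> Permutation xs ys -> (h xs z <-> h ys z);
  h_assoc : forall xs i j z, length xs = 2 * m - 1 -> i < m -> j < m ->
              (h_assoc_at i xs z <-> h_assoc_at j xs z);
  h_zero : forall u z, h (u :: repeat zero (m - 1)) z <-> z = u;
  h_zero_unique : forall e, (forall u z, h (u :: repeat e (m - 1)) z <-> z = u) -> e = zero;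
  h_inv : forall u, h (u :: inv u :: repeat zero (m - 2)) zero;
  h_inv_unique : forall u v, h (u :: v :: repeat zero (m - 2)) zero -> v = inv u;
  h_rev : forall xs z i, length xs = m -> h xs z -> i < m ->
            h (z :: map inv (remove_at i xs)) (nth i xs zero);
  k_comm : forall xs ys, length xs = n -> Permutation xs ys -> k xs = k ys;
  k_assoc : forall xs i j, length xs = 2 * n - 1 -> i < n -> j < n ->
              k_assoc_at i xs = k_assoc_at j xs;
  k_distr : forall us i xs z, length us = n -> i < n -> length xs = m ->
              ((exists y, h xs y /\ z = k (replace_at i y us)) <->
               h (map (fun x => k (replace_at i x us)) xs) z);
  k_zero : forall us, length us = n - 1 -> k (zero :: us) = zero;
  k_one : forall u, k (u :: repeat one (n - 1)) = u
}.

Definition endomorphism (theta : H -> H) : Prop :=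
  (forall xs z, length xs = m ->
     ((exists y, h xs y /\ z = theta y) <-> h (map theta xs) z)) /\
  (forall xs, length xs = n -> theta (k xs) = k (map theta xs)) /\
  theta one = one.

Definition subhypergroup (I : H -> Prop) : Prop :=
  (exists x, I x) /\ I zero /\ (forall x, I x -> I (inv x)) /\
  (forall xs z, length xs = m -> Forall I xs -> h xs z -> I z).

Definition hyperideal (I : H -> Prop) : Prop :=
  subhypergroup I /\
  (forall us i, length us = n -> i < n -> I (nth i us zero) -> I (k us)).

Definition proper (I : H -> Prop) : Prop := exists x, ~ I x.

(* kpow l u = k_(l)(u^(l(n-1)+1)) for l >= 1 *)
Fixpoint kpow (l : nat) (u : H) : H :=
  match l with
  | 0 => u
  | S l' => k (kpow l' u :: repeat u (n - 1))
  end.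

Definition rad (E : H -> Prop) : H -> Prop := fun u =>
  (exists r, 1 <= r <= n /\ E (k (repeat u r ++ repeat one (n - r)))) \/
  (exists l, 1 <= l /\ n < l * (n - 1) + 1 /\ E (kpow l u)).

Definition theta_maximal (theta : H -> H) (M : H -> Prop) : Prop :=
  hyperideal M /\ proper M /\
  forall E, hyperideal E -> (forall x, M x -> E x) ->
    (forall x, E x -> M (theta x)) \/ (forall x, E x).

Definition endo_prime (theta : H -> H) (E : H -> Prop) : Prop :=
  hyperideal E /\ proper E /\
  forall us, length us = n -> E (k us) ->
    exists i, i < n /\ (E (nth i us zero) \/ E (theta (k (replace_at i one us)))).

Definition endo_primary (theta : H -> H) (E : H -> Prop) : Prop :=
  hyperideal E /\ proper E /\
  forall us, length us = n -> E (k us) ->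
    exists i, i < n /\ (E (nth i us zero) \/ rad E (theta (k (replace_at i one us)))).

End Hyperring.

(* Main.v *)
Require Import Defs.
From Stdlib Require Import List Arith Permutation Lia Classical.
From mathcomp Require boolp classical_sets.
Import ListNotations.

Lemma nth_split_eq {A} (us : list A) i d : i < length us ->
  us = firstn i us ++ nth i us d :: skipn (S i) us.
Proof.
  revert i; induction us as [|a us IH]; intros [|i] Hi; simpl in *; try lia; auto.
  f_equal; apply IH; lia.
Qed.

Lemma replace_perm {A} i (y : A) us : i < length us ->
  Permutation (replace_at i y us) (y :: remove_at i us).
Proof. intros; unfold replace_at, remove_at. apply Permutation_sym, Permutation_middle. Qed.

Lemma length_remove {A} i (us : list A) : i < length us -> length (remove_at i us) = length us - 1.
Proof.
  intros Hi; unfold remove_at. rewrite length_app, length_firstn, length_skipn. lia.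
Qed.

Lemma length_replace {A} i (y:A) us : i < length us -> length (replace_at i y us) = length us.
Proof.
  intros Hi; unfold replace_at. rewrite length_app, length_firstn; cbn [length]; rewrite length_skipn. lia.
Qed.

Lemma nth_replace {A} i (y:A) us d : i < length us -> nth i (replace_at i y us) d = y.
Proof.
  intros Hi; unfold replace_at. rewrite app_nth2; rewrite length_firstn; try lia.
  replace (i - Init.Nat.min i (length us)) with 0 by lia. reflexivity.
Qed.

Lemma perm_nth {A} i (us : list A) d : i < length us -> Permutation us (nth i us d :: remove_at i us).
Proof.
  intros Hi. rewrite (nth_split_eq us i d Hi) at 1. unfold remove_at.
  apply Permutation_sym, Permutation_middle.
Qed.

Lemma k_swap {H m n h k zero one inv} (KH : @KrasnerHyperring H m n h k zero one inv)
  a (as' bs : list H) : length as' = n - 1 -> length bs = n - 1 ->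
  k (k (a :: as') :: bs) = k (k (a :: bs) :: as').
Proof.
  intros La Lb. pose proof (kh_n KH) as Hn.
  set (xs := as' ++ a :: bs).
  assert (Lx : length xs = 2 * n - 1) by (unfold xs; rewrite length_app; simpl; lia).
  pose proof (k_assoc KH xs (i:=0) (j:=n-1) Lx ltac:(lia) ltac:(lia)) as E.
  unfold k_assoc_at in E. simpl in E.
  assert (F1 : firstn n xs = as' ++ [a]).
  { unfold xs. replace n with (length as' + 1) by lia.
    rewrite firstn_app, firstn_all2 by lia. replace (length as' + 1 - length as') with 1 by lia. reflexivity. }
  assert (S1 : skipn n xs = bs).
  { unfold xs. replace n with (length as' + 1) by lia.
    rewrite skipn_app, skipn_all2 by lia. replace (length as' + 1 - length as') with 1 by lia. reflexivity. }
  assert (F2 : firstn (n-1) xs = as').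
  { unfold xs. rewrite <- La. rewrite firstn_app, firstn_all, Nat.sub_diag. simpl. apply app_nil_r. }
  assert (S2 : skipn (n-1) xs = a :: bs).
  { unfold xs. rewrite <- La. rewrite skipn_app, skipn_all, Nat.sub_diag. reflexivity. }
  assert (S3 : skipn (n - 1 + n) xs = []).
  { apply skipn_all2. lia. }
  rewrite F1, S1, F2, S2, S3 in E.
  rewrite firstn_all2 in E by (simpl; lia).
  assert (Ek1 : k (a :: as') = k (as' ++ [a])).
  { apply (k_comm KH). simpl; lia. rewrite <- Permutation_middle, app_nil_r. reflexivity. }
  rewrite Ek1, E. apply (k_comm KH).
  rewrite length_app; simpl; lia.
  apply Permutation_sym. try rewrite app_nil_r. rewrite Permutation_app_comm. reflexivity.
Qed.

Lemma k_zero_at {H m n h k zero one inv} (KH : @KrasnerHyperring H m n h k zero one inv)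
  i us : length us = n -> i < n -> k (replace_at i zero us) = zero.
Proof.
  intros L Hi. rewrite (k_comm KH (ys := zero :: remove_at i us)).
  apply (k_zero KH). rewrite length_remove; lia.
  rewrite length_replace; lia.
  apply replace_perm; lia.
Qed.

Lemma k_inv_at {H m n h k zero one inv} (KH : @KrasnerHyperring H m n h k zero one inv)
  i us x : length us = n -> i < n -> k (replace_at i (inv x) us) = inv (k (replace_at i x us)).
Proof.
  intros L Hi. pose proof (kh_m KH).
  pose proof (h_inv KH x) as Hx.
  set (f := fun y => k (replace_at i y us)).
  assert (Hm : h (map f (x :: inv x :: repeat zero (m-2))) zero).
  { apply (k_distr KH); auto. simpl; rewrite repeat_length; lia.
    exists zero; split; auto. symmetry; apply (k_zero_at KH); auto. }
  simpl in Hm. rewrite map_repeat in Hm.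
  replace (f zero) with zero in Hm by (symmetry; apply (k_zero_at KH); auto).
  apply (h_inv_unique KH) in Hm. exact Hm.
Qed.

Lemma ideal_at {H m n h k zero one inv} (KH : @KrasnerHyperring H m n h k zero one inv)
  P i us x : hyperideal m n h k zero inv P -> length us = n -> i < n -> P x ->
  P (k (replace_at i x us)).
Proof.
  intros [_ HP] L Hi Px. apply (HP _ i). rewrite length_replace; lia. auto.
  rewrite nth_replace; auto; lia.
Qed.

Lemma colon_ideal {H m n h k zero one inv} (KH : @KrasnerHyperring H m n h k zero one inv)
  P i us : hyperideal m n h k zero inv P -> length us = n -> i < n ->
  hyperideal m n h k zero inv (fun x => P (k (replace_at i x us))).
Proof.
  intros HP L Hi. pose proof (kh_n KH) as Hn.
  destruct HP as [[_ [P0 [Pinv Ph]]] Pid].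
  split; [split; [|split; [|split]]|].
  - exists zero. rewrite (k_zero_at KH); auto.
  - rewrite (k_zero_at KH); auto.
  - intros x Px. rewrite (k_inv_at KH); auto.
  - intros xs z Lx Fx Hz. apply (Ph (map (fun y => k (replace_at i y us)) xs)).
    rewrite length_map; auto.
    apply Forall_map; auto.
    apply (k_distr KH); auto. eauto.
  - intros ys j Ly Hj Py.
    set (y := nth j ys zero) in *.
    set (ys' := remove_at j ys). set (rest := remove_at i us).
    assert (Lys' : length ys' = n - 1) by (unfold ys'; rewrite length_remove; lia).
    assert (Lr : length rest = n - 1) by (unfold rest; rewrite length_remove; lia).
    assert (E1 : k ys = k (y :: ys')) by (apply (k_comm KH); auto; apply perm_nth; lia).
    assert (E2 : forall z, k (replace_at i z us) = k (z :: rest)).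
    { intros z; apply (k_comm KH). rewrite length_replace; lia. apply replace_perm; lia. }
    rewrite E2, E1, (k_swap KH); auto.
    apply (Pid _ 0); simpl; auto; try lia. rewrite <- E2. exact Py.
Qed.

Lemma colon1_ideal {H m n h k zero one inv} (KH : @KrasnerHyperring H m n h k zero one inv)
  P u1 : hyperideal m n h k zero inv P ->
  hyperideal m n h k zero inv (fun x => P (k (u1 :: x :: repeat one (n-2)))).
Proof.
  intros HP. pose proof (kh_n KH).
  exact (colon_ideal KH P 1 (u1 :: one :: repeat one (n-2)) HP
          ltac:(simpl; rewrite repeat_length; lia) ltac:(lia)).
Qed.

Lemma k_one' {H m n h k zero one inv} (KH : @KrasnerHyperring H m n h k zero one inv) u :
  k (u :: one :: repeat one (n-2)) = u.
Proof.
  pose proof (kh_n KH). rewrite <- (k_one KH u) at 2.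
  replace (n-1) with (S (n-2)) by lia. reflexivity.
Qed.

Lemma colon1_c {H m n h k zero one inv} (KH : @KrasnerHyperring H m n h k zero one inv)
  u1 rest : length rest = n - 1 ->
  k (u1 :: k (one :: rest) :: repeat one (n-2)) = k (u1 :: rest).
Proof.
  intros Lr. pose proof (kh_n KH).
  rewrite (k_comm KH (ys := k (one :: rest) :: u1 :: repeat one (n-2))).
  2:{ simpl; rewrite repeat_length; lia. }
  2:{ apply perm_swap. }
  rewrite (k_swap KH); auto. 2:{ simpl; rewrite repeat_length; lia. }
  rewrite (k_comm KH (xs := one :: u1 :: repeat one (n-2)) (ys := u1 :: one :: repeat one (n-2))).
  rewrite (k_one' KH). reflexivity.
  simpl; rewrite repeat_length; lia. apply perm_swap.
Qed.

Lemma part1 {H m n h k zero one inv} (KH : @KrasnerHyperring H m n h k zero one inv) theta M :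
  theta_maximal m n h k zero inv theta M -> endo_prime m n h k zero one inv theta M.
Proof.
  intros [HM [PM Mmax]]. split; [exact HM|split; [exact PM|]].
  intros us L Hk. pose proof (kh_n KH).
  destruct us as [|u1 rest]; [simpl in L; lia|].
  simpl in L. exists 0. split; [lia|].
  destruct (Mmax _ (colon1_ideal KH M u1 HM)) as [Hth|Hall].
  - intros x Mx. apply (ideal_at KH M 1 (u1 :: one :: repeat one (n-2)) x HM); auto.
    simpl; rewrite repeat_length; lia.
  - right. apply Hth. unfold replace_at; simpl. rewrite (colon1_c KH); auto. lia.
  - left. simpl. rewrite <- (k_one' KH u1). apply Hall.
Qed.

Lemma zorn_gen (T : Type) (P : (T -> Prop) -> Prop) (I : T -> Prop) :
  P I ->
  (forall F : (T -> Prop) -> Prop, (forall A, F A -> P A) -> (exists A, F A) ->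
     (forall A B, F A -> F B -> (forall x, A x -> B x) \/ (forall x, B x -> A x)) ->
     P (fun x => exists A, F A /\ A x)) ->
  exists M, P M /\ (forall x, I x -> M x) \/ True.
Abort.

Lemma zorn_gen (T : Type) (P : (T -> Prop) -> Prop) (I : T -> Prop) :
  P I ->
  (forall F : (T -> Prop) -> Prop, (forall A, F A -> P A) -> (exists A, F A) ->
     (forall A B, F A -> F B -> (forall x, A x -> B x) \/ (forall x, B x -> A x)) ->
     P (fun x => exists A, F A /\ A x)) ->
  exists M, P M /\ (forall N, P N -> (forall x, M x -> N x) -> forall x, N x -> M x).
Proof.
  intros PI Hch.
  set (T' := {A : T -> Prop | P A}).
  set (R := fun (a b : T') => boolp.asbool (forall x, proj1_sig a x -> proj1_sig b x)).
  destruct (@classical_sets.ZL_preorder T' (exist _ I PI) R) as [[M PM] HM].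
  - intros t. apply boolp.asboolT. auto.
  - intros r s t Hrs Hst. apply boolp.asboolT. apply boolp.asboolW in Hrs. apply boolp.asboolW in Hst. auto.
  - intros A Htot.
    destruct (classic (exists a, A a)) as [[a Aa]|Hne].
    + set (F := fun B : T -> Prop => exists (b : T'), A b /\ proj1_sig b = B).
      assert (PF : P (fun x => exists B, F B /\ B x)).
      { apply Hch.
        - intros B [b [_ <-]]. exact (proj2_sig b).
        - exists (proj1_sig a). exists a. auto.
        - intros B C [b [Ab <-]] [c [Ac <-]].
          destruct (Htot b c Ab Ac) as [H1|H1]; apply boolp.asboolW in H1; auto. }
      exists (exist _ _ PF). intros s As. apply boolp.asboolT. simpl.
      intros x sx. exists (proj1_sig s). split; auto. exists s; auto.
    + exists (exist _ I PI). intros s As. exfalso. apply Hne; eauto.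
  - exists M. split; auto. intros N PN MN.
    specialize (HM (exist _ N PN)). 
    assert (R (exist _ M PM) (exist _ N PN) = true) as HR by (apply boolp.asboolT; exact MN).
    pose proof (boolp.asboolW (HM HR)). auto.
Qed.

Lemma chain_forall {T} (F : (T -> Prop) -> Prop) (xs : list T) :
  (exists A, F A) ->
  (forall A B, F A -> F B -> (forall x, A x -> B x) \/ (forall x, B x -> A x)) ->
  Forall (fun x => exists A, F A /\ A x) xs -> exists A, F A /\ Forall A xs.
Proof.
  intros [A0 FA0] Hch Hf. induction Hf as [|x xs [A [FA Ax]] _ [B [FB HB]]].
  - exists A0; auto.
  - destruct (Hch A B FA FB) as [HAB|HBA].
    + exists B. split; auto.
    + exists A. split; auto. constructor; auto. eapply Forall_impl; [|exact HB]. auto.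
Qed.

Definition fam {H m n h k zero inv} (one : H) (Q : H -> Prop) (N : H -> Prop) : Prop :=
  hyperideal m n h k zero inv N /\ ~ N one /\ (forall x, Q x -> N x).

Lemma fam_zorn {H m n h k zero one inv} (KH : @KrasnerHyperring H m n h k zero one inv) Q :
  @fam H m n h k zero inv one Q Q ->
  exists M, @fam H m n h k zero inv one Q M /\
    (forall N, @fam H m n h k zero inv one Q N -> (forall x, M x -> N x) -> forall x, N x -> M x).
Proof.
  intros HQ. apply zorn_gen with (I := Q); auto.
  intros F HF [A0 FA0] Hch. unfold fam, hyperideal, subhypergroup.
  refine (conj (conj (conj _ (conj _ (conj _ _))) _) (conj _ _)).
  - exists zero, A0. split; auto. destruct (HF _ FA0) as [[[_ [Z _]] _] _]. exact Z.
  - exists A0. split; auto. destruct (HF _ FA0) as [[[_ [Z _]] _] _]. exact Z.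
  - intros x [A [FA Ax]]. exists A. split; auto. destruct (HF _ FA) as [[[_ [_ [Z _]]] _] _]. auto.
  - intros xs z Lx Fx Hz. destruct (chain_forall F xs (ex_intro _ A0 FA0) Hch Fx) as [A [FA HA]].
    exists A. split; auto. destruct (HF _ FA) as [[[_ [_ [_ Hh]]] _] _]. eauto.
  - intros us i L Hi [A [FA Ax]]. exists A. split; auto. destruct (HF _ FA) as [[_ Hid] _]. eauto.
  - intros [A [FA Ao]]. destruct (HF _ FA) as [_ [Hn _]]. auto.
  - intros x Qx. exists A0. split; auto. destruct (HF _ FA0) as [_ [_ HQA]]. auto.
Qed.

Lemma prime_lite {H m n h k zero one inv} (KH : @KrasnerHyperring H m n h k zero one inv) Q Mx :
  @fam H m n h k zero inv one Q Mx ->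
  (forall N, @fam H m n h k zero inv one Q N -> (forall x, Mx x -> N x) -> forall x, N x -> Mx x) ->
  forall a rest, length rest = n - 1 -> Mx (k (a :: rest)) -> Mx a \/ Mx (k (one :: rest)).
Proof.
  intros [HM [Mo MQ]] Hmax a rest Lr Hk. pose proof (kh_n KH).
  destruct (classic (Mx a)) as [Ma|Ma]; [left; auto|right].
  set (Q' := fun x => Mx (k (a :: x :: repeat one (n-2)))).
  assert (MQ' : forall x, Mx x -> Q' x).
  { intros x Mxx. apply (ideal_at KH Mx 1 (a :: one :: repeat one (n-2)) x HM); auto.
    simpl; rewrite repeat_length; lia. }
  assert (F' : @fam H m n h k zero inv one Q Q').
  { split; [apply (colon1_ideal KH); auto|split].
    - unfold Q'. rewrite (k_one' KH). auto.
    - intros x Qx. apply MQ'. auto. }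
  apply (Hmax Q' F' MQ'). unfold Q'. rewrite (colon1_c KH); auto.
Qed.

Lemma pow1 {H m n h k zero one inv} (KH : @KrasnerHyperring H m n h k zero one inv) Q Mx :
  @fam H m n h k zero inv one Q Mx ->
  (forall N, @fam H m n h k zero inv one Q N -> (forall x, Mx x -> N x) -> forall x, N x -> Mx x) ->
  forall x, ~ Mx x -> forall r, r <= n -> ~ Mx (k (repeat x r ++ repeat one (n - r))).
Proof.
  intros HF Hmax x Nx. pose proof (kh_n KH). destruct HF as [HM [Mo MQ]] eqn:EF.
  induction r as [|r IH]; intros Hr.
  - simpl. rewrite Nat.sub_0_r.
    replace (repeat one n) with (one :: repeat one (n-1))
      by (destruct n; [lia|]; simpl; rewrite Nat.sub_0_r; reflexivity).
    rewrite (k_one KH). auto.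
  - intros Hk. simpl in Hk.
    destruct (prime_lite KH Q Mx HF Hmax x (repeat x r ++ repeat one (n - S r))) as [C|C]; auto.
    + rewrite length_app, !repeat_length. lia.
    + apply IH; [lia|]. rewrite (k_comm KH (xs := repeat x r ++ repeat one (n - r))
        (ys := one :: repeat x r ++ repeat one (n - S r))); auto.
      rewrite length_app, !repeat_length; lia.
      replace (n - r) with (S (n - S r)) by lia. simpl. apply Permutation_sym, Permutation_middle.
Qed.

Lemma powl {H m n h k zero one inv} (KH : @KrasnerHyperring H m n h k zero one inv) Q Mx :
  @fam H m n h k zero inv one Q Mx ->
  (forall N, @fam H m n h k zero inv one Q N -> (forall x, Mx x -> N x) -> forall x, N x -> Mx x) ->
  forall x l, Mx (@kpow H n k l x) -> Mx x.
Proof.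
  intros HF Hmax x l. pose proof (kh_n KH). induction l as [|l IH]; simpl; auto.
  intros Hk. destruct (prime_lite KH Q Mx HF Hmax _ _ (repeat_length x (n-1)) Hk) as [C|C]; auto.
  apply NNPP; intros Nx. apply (pow1 KH Q Mx HF Hmax x Nx (n-1)); [lia|].
  rewrite (k_comm KH (xs := repeat x (n-1) ++ repeat one (n - (n-1)))
        (ys := one :: repeat x (n-1))); auto.
  rewrite length_app, !repeat_length; lia.
  replace (n - (n-1)) with 1 by lia. simpl. apply Permutation_sym.
  rewrite <- Permutation_middle, app_nil_r. reflexivity.
Qed.

Lemma part2 {H m n h k zero one inv} (KH : @KrasnerHyperring H m n h k zero one inv) theta E :
  hyperideal m n h k zero inv E ->
  theta_maximal m n h k zero inv theta (rad n k one E) ->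
  endo_primary m n h k zero one inv theta E.
Proof.
  intros HE [HRid [[x0 Nx0] Rmax]]. pose proof (kh_n KH).
  assert (ER : forall x, E x -> rad n k one E x).
  { intros x Ex. left. exists 1. split; [lia|]. simpl. rewrite (k_one KH). auto. }
  split; [exact HE|split; [exists x0; intro; apply Nx0; auto|]].
  intros us L Hk. destruct us as [|u1 rest]; [simpl in L; lia|]. simpl in L.
  exists 0. split; [lia|].
  destruct (classic (E u1)) as [Eu|Eu]; [left; exact Eu|right].
  unfold replace_at; simpl.
  apply NNPP; intros Nc.
  set (Q := fun x => E (k (u1 :: x :: repeat one (n-2)))).
  assert (HQ : hyperideal m n h k zero inv Q) by (apply (colon1_ideal KH); auto).
  assert (FQ : @fam H m n h k zero inv one Q Q).
  { split; auto. split; auto. unfold Q. rewrite (k_one' KH). auto. }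
  destruct (fam_zorn KH Q FQ) as [Mx [FM Hmax]].
  pose proof FM as [HMx [Mxo MxQ]].
  assert (EMx : forall x, E x -> Mx x).
  { intros x Ex. apply MxQ. unfold Q.
    apply (ideal_at KH E 1 (u1 :: one :: repeat one (n-2)) x HE); auto.
    simpl; rewrite repeat_length; lia. }
  assert (RMx : forall x, rad n k one E x -> Mx x).
  { intros x [[r [Hr Er]] | [l [_ [_ El]]]].
    - apply NNPP; intros Nx. apply (pow1 KH Q Mx FM Hmax x Nx r); [lia|]. auto.
    - apply (powl KH Q Mx FM Hmax x l). auto. }
  destruct (Rmax Mx HMx RMx) as [Hth|Hall].
  - apply Nc, Hth, MxQ. unfold Q. rewrite (colon1_c KH); auto. lia.
  - apply Mxo, Hall.
Qed.

Theorem mainTheorem20 (H : Type) (m n : nat) (h : list H -> H -> Prop) (k : list H -> H)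
  (zero one : H) (inv : H -> H) (theta : H -> H) :
  KrasnerHyperring m n h k zero one inv ->
  endomorphism m n h k one theta ->
  (forall M : H -> Prop, theta_maximal m n h k zero inv theta M ->
     endo_prime m n h k zero one inv theta M) /\
  (forall E : H -> Prop, hyperideal m n h k zero inv E ->
     theta_maximal m n h k zero inv theta (rad n k one E) ->
     endo_primary m n h k zero one inv theta E).
Proof.
  intros KH _. split.
  - intros M HM. exact (part1 KH theta M HM).
  - intros E HE HR. exact (part2 KH theta E HE HR).
Qed.
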